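(* Let $x_1,\dots,x_k\ge0$ be real numbers and let $2n$ be a nonnegative even integer. Then $$\sum_{2m_1+\cdots+2m_k=2n}\binom{2n}{2m_1,\dots,2m_k}x_1^{2m_1}\cdots x_k^{2m_k}\ \ge\ \frac{1}{2^{k-1}}\Big(\sum_{i=1}^kx_i\Big)^{2n},$$ where the sum is over all $k$-tuples of nonnegative integers $(m_1,\dots,m_k)$ with $2m_1+\cdots+2m_k=2n$. *)

(* Defs.v *)
From mathcomp Require Import all_boot all_order all_algebra.
Set Implicit Arguments. Unset Strict Implicit. Unset Printing Implicit Defensive.

(* Multinomial coefficient  (N choose a_1,...,a_k) = N! / (a_1! ... a_k!),
   meaningful when a_1 + ... + a_k = N (which is how it is used). *)
Definition multinomial (k N : nat) (a : 'I_k -> nat) : nat :=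
  N`! %/ \prod_(i < k) (a i)`!.

(* Main.v *)
Require Import Defs.
From mathcomp Require Import all_boot all_order all_algebra zify.
From mathcomp.algebra_tactics Require Import ring lra.
Import Order.TTheory GRing.Theory Num.Theory.
Local Open Scope ring_scope.

Definition fc (T : Type) k (a : T) (g : {ffun 'I_k -> T}) : {ffun 'I_k.+1 -> T} :=
  [ffun i => if unlift ord0 i is Some j then g j else a].
Arguments fc {T k}.
Lemma fc0 T k (a : T) (g : {ffun 'I_k -> T}) : fc a g ord0 = a.
Proof. by rewrite ffunE unlift_none. Qed.
Lemma fcS T k (a : T) (g : {ffun 'I_k -> T}) j : fc a g (lift ord0 j) = g j.
Proof. by rewrite ffunE liftK. Qed.

Lemma sum_ffunS (R : nmodType) (T : finType) k (F : {ffun 'I_k.+1 -> T} -> R) :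
  \sum_f F f = \sum_(a : T) \sum_(g : {ffun 'I_k -> T}) F (fc a g).
Proof.
rewrite pair_big /=.
rewrite (reindex (fun p : T * {ffun 'I_k -> T} => fc p.1 p.2)) //=.
exists (fun f => (f ord0, [ffun j => f (lift ord0 j)])) => [[a g] _|f _] /=.
  congr pair; first by rewrite fc0.
  by apply/ffunP => j; rewrite !ffunE liftK.
apply/ffunP => i; rewrite !ffunE; case: unliftP => [j ->|->] //.
by rewrite ffunE.
Qed.

Lemma multi (R : realFieldType) (B k : nat) (y : 'I_k -> R) (N : nat) :
  (N < B)%N ->
  \sum_(f : {ffun 'I_k -> 'I_B} | (\sum_i f i == N)%N)
     \prod_i (y i ^+ f i / (f i)`!%:R) = (\sum_i y i) ^+ N / N`!%:R.
Proof.
elim: k y N => [|k IH] y N hN.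
  rewrite big_ord0.
  under eq_bigl => f do rewrite big_ord0.
  under eq_bigr => f _ do rewrite big_ord0.
  case: N hN => [|N] hN.
    by rewrite sumr_const card_ffun card_ord /= fact0 expr0 divr1 card_ord.
  by rewrite big_pred0 // expr0n /= mul0r.
rewrite big_mkcond /= sum_ffunS.
have E a (g : {ffun 'I_k -> 'I_B}) :
  (if (\sum_(i < k.+1) fc a g i)%N == N
         then \prod_(i < k.+1) (y i ^+ fc a g i / (fc a g i)`!%:R)
         else 0) = if (a <= N)%N then y ord0 ^+ a / a`!%:R *
    (if (\sum_j g j == N - a)%N then \prod_j (y (lift ord0 j) ^+ g j / (g j)`!%:R) else 0)
    else 0.
  rewrite !big_ord_recl fc0.
  have -> : (\sum_(i < k) fc a g (lift ord0 i))%N = (\sum_i g i)%N.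
    by apply: eq_bigr => i _; rewrite fcS.
  under [X in _ * X]eq_bigr do rewrite fcS.
  case: leqP => h.
    have -> : ((a + \sum_i g i)%N == N) = ((\sum_j g j)%N == (N - a)%N).
      by apply/eqP/eqP; lia.
    by case: ifP; rewrite ?mulr0.
  rewrite ifF //; apply/negbTE/eqP; lia.
have F (a : 'I_B) : \sum_(g : {ffun 'I_k -> 'I_B}) (if (a <= N)%N then y ord0 ^+ a / a`!%:R *
      (if (\sum_j g j)%N == (N - a)%N
       then \prod_j (y (lift ord0 j) ^+ g j / (g j)`!%:R)
       else 0) else 0) = if (a <= N)%N then y ord0 ^+ a / a`!%:R *
      ((\sum_j y (lift ord0 j)) ^+ (N - a) / (N - a)`!%:R) else 0.
  case: leqP => h; last by rewrite big1.
  rewrite -mulr_sumr -big_mkcond IH //; lia.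
rewrite [LHS](eq_bigr (fun (a : 'I_B) => if (a <= N)%N then y ord0 ^+ a / a`!%:R *
      ((\sum_j y (lift ord0 j)) ^+ (N - a) / (N - a)`!%:R) else 0)); last first.
  by move=> a _; rewrite -F; apply: eq_bigr => g _; exact: E.
rewrite -big_mkcond /=.
transitivity (\sum_(a < N.+1) (y ord0 ^+ a / a`!%:R *
      ((\sum_j y (lift ord0 j)) ^+ (N - a) / (N - a)`!%:R))).
  by rewrite (big_ord_widen B (fun a => y ord0 ^+ a / a`!%:R *
      ((\sum_j y (lift ord0 j)) ^+ (N - a) / (N - a)`!%:R)) hN).
rewrite [in RHS]big_ord_recl [in RHS]addrC exprDn mulr_suml.
apply: eq_bigr => i _.
have hi : (i <= N)%N by rewrite -ltnS.
have := bin_fact hi => /(congr1 (fun m => m%:R : R)); rewrite !natrM => HB.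
rewrite -[X in _ = _ / X]HB -mulr_natr.
have h3 : 'C(N, i)%:R != 0 :> R by rewrite pnatr_eq0 -lt0n bin_gt0.
have h1 : i`!%:R != 0 :> R by rewrite pnatr_eq0 -lt0n fact_gt0.
have h2 : (N - i)`!%:R != 0 :> R by rewrite pnatr_eq0 -lt0n fact_gt0.
field.
by rewrite h1 h2 h3.
Qed.

Lemma dvd_fact k (a : 'I_k -> nat) : (\prod_i (a i)`! %| (\sum_i a i)`!)%N.
Proof.
elim: k a => [|k IH] a; first by rewrite !big_ord0.
rewrite !big_ord_recr /=.
rewrite -(bin_fact (leq_addr (a ord_max) (\sum_(i < k) a (widen_ord (leqnSn k) i)))) addKn.
by apply: dvdn_mull; apply: dvdn_mul => //; exact: IH.
Qed.

Lemma sign_prod (R : realFieldType) k (x : 'I_k -> R) (f : 'I_k -> nat) :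
 \sum_(e : {ffun 'I_k -> bool}) \prod_i ((if e i then x i else - x i) ^+ f i / (f i)`!%:R)
 = \prod_i (x i ^+ f i / (f i)`!%:R * (1 + (-1) ^+ f i)).
Proof.
rewrite -(bigA_distr_bigA (fun i (b : bool) => (if b then x i else - x i) ^+ f i / (f i)`!%:R)).
apply: eq_bigr => i _; rewrite big_bool /= -[- x i]mulN1r exprMn; ring.
Qed.

Lemma multiv (R : realFieldType) k (a : 'I_k -> nat) N : (\sum_i a i)%N = N ->
  (multinomial N a)%:R = N`!%:R / (\prod_i (a i)`!)%:R :> R.
Proof.
move=> <-; rewrite natr_div ?dvd_fact //.
by rewrite unitfE pnatr_eq0 -lt0n prodn_gt0 // => i; rewrite fact_gt0.
Qed.

Lemma even_reindex (R : realFieldType) k n (x : 'I_k -> R) :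
 \sum_(m : {ffun 'I_k -> 'I_n.+1} | (\sum_(i < k) (2 * m i) == 2 * n)%N)
    \prod_i (x i ^+ (2 * m i) / (2 * m i)`!%:R)
 = \sum_(f : {ffun 'I_k -> 'I_(2 * n).+1} | (\sum_i f i == 2 * n)%N)
    \prod_i (x i ^+ f i / (f i)`!%:R * ((1 + (-1) ^+ f i) / 2)).
Proof.
rewrite [RHS](bigID (fun f : {ffun 'I_k -> 'I_(2 * n).+1} => [forall i, ~~ odd (f i)])) /=.
rewrite [X in _ = _ + X]big1 ?addr0; last first.
  move=> f /andP[_ /forallPn [i /negPn hi]].
  by rewrite (bigD1 i) //= -signr_odd hi expr1 subrr mul0r mulr0 mul0r.
pose phi (m : {ffun 'I_k -> 'I_n.+1}) : {ffun 'I_k -> 'I_(2 * n).+1} :=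
  [ffun i => inord (2 * m i)].
pose h' (f : {ffun 'I_k -> 'I_(2 * n).+1}) : {ffun 'I_k -> 'I_n.+1} :=
  [ffun i => inord (f i %/ 2)].
have Hphi m i : (phi m i : nat) = (2 * m i)%N.
  rewrite ffunE inordK //; have := ltn_ord (m i); lia.
rewrite (reindex_onto phi h') /=; last first.
  move=> f /andP[_ /forallP ev]; apply/ffunP => i; apply: val_inj.
  have lti := ltn_ord (f i).
  have := divn_eq (f i) 2; rewrite modn2 (negbTE (ev i)) addn0 => hd.
  rewrite !ffunE /= inordK ?inordK; rewrite ?ffunE; lia.
apply: congr_big => // m.
  have -> : (\sum_(i<k) phi m i)%N = (\sum_i 2 * m i)%N.
    by apply: eq_bigr => i _; exact: Hphi.
  have -> : [forall i, ~~ odd (phi m i)] by apply/forallP => i; rewrite Hphi oddM.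
  suff -> : h' (phi m) == m by rewrite !andbT.
  apply/eqP/ffunP => i; apply: val_inj; rewrite ffunE /= Hphi inordK; have := ltn_ord (m i); lia.
move=> _; apply: eq_bigr => i _; rewrite Hphi -signr_odd oddM /= expr0.
have -> : (1 + 1) / 2 = 1 :> R by rewrite -[1 + 1]/(2%:R) divff // pnatr_eq0.
by rewrite mulr1.
Qed.

Theorem lemma9 (R : realFieldType) (k n : nat) (x : 'I_k -> R)
  (hk : (0 < k)%N) (hx : forall i, 0 <= x i) :
  \sum_(m : {ffun 'I_k -> 'I_n.+1} | (\sum_(i < k) (2 * m i) == 2 * n)%N)
     (multinomial (2 * n) (fun i => (2 * m i)%N))%:R
       * \prod_(i < k) x i ^+ (2 * m i)
  >= (2%:R ^+ k.-1)^-1 * (\sum_(i < k) x i) ^+ (2 * n).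
Proof.
have L : \sum_(m : {ffun 'I_k -> 'I_n.+1} | (\sum_(i < k) (2 * m i) == 2 * n)%N)
     (multinomial (2 * n) (fun i => (2 * m i)%N))%:R
       * \prod_(i < k) x i ^+ (2 * m i) = (2 * n)`!%:R *
   \sum_(m : {ffun 'I_k -> 'I_n.+1} | (\sum_(i < k) (2 * m i) == 2 * n)%N)
    \prod_i (x i ^+ (2 * m i) / (2 * m i)`!%:R).
  rewrite mulr_sumr; apply: eq_bigr => m /eqP Hm.
  rewrite (@multiv R _ _ _ Hm) natr_prod prodf_div.
  by rewrite mulrAC mulrA.
rewrite L even_reindex.
have P2 (f : {ffun 'I_k -> 'I_(2 * n).+1}) :
  \prod_i (x i ^+ f i / (f i)`!%:R * ((1 + (-1) ^+ f i) / 2)) =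
  2^-1 ^+ k * \sum_(e : {ffun 'I_k -> bool})
     \prod_i ((if e i then x i else - x i) ^+ f i / (f i)`!%:R).
  rewrite sign_prod.
  have <- : \prod_(i < k) (2^-1 : R) = 2^-1 ^+ k by rewrite prodr_const card_ord.
  rewrite -big_split /=; apply: eq_bigr => i _; ring.
rewrite (eq_bigr _ (fun f _ => P2 f)) -mulr_sumr exchange_big /=.
rewrite (eq_bigr (fun e : {ffun 'I_k -> bool} =>
   (\sum_i (if e i then x i else - x i)) ^+ (2 * n) / (2 * n)`!%:R)); last first.
  by move=> e _; exact: (@multi R _ _ (fun i => if e i then x i else - x i) _ (ltnSn _)).
rewrite -mulr_suml.
set S := \sum_(i < k) x i.
set T := \sum_(e : {ffun 'I_k -> bool}) _.
have HT : 2 * S ^+ (2 * n) <= T.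
  rewrite /T (bigD1 [ffun=> true]) // (bigD1 [ffun=> false]) /=; last first.
    by apply/eqP => /ffunP/(_ (Ordinal hk)); rewrite !ffunE.
  have -> : \sum_i (if ([ffun=> true] : {ffun 'I_k -> bool}) i then x i else - x i) = S.
    by apply: eq_bigr => i _; rewrite ffunE.
  have -> : \sum_i (if ([ffun=> false] : {ffun 'I_k -> bool}) i then x i else - x i) = - S.
    by rewrite -sumrN; apply: eq_bigr => i _; rewrite ffunE.
  rewrite [(- S) ^+ _]exprM sqrrN -exprM.
  have : 0 <= \sum_(e | (e != [ffun=> true]) && (e != [ffun=> false]))
     (\sum_i (if e i then x i else - x i)) ^+ (2 * n).
    by apply: sumr_ge0 => e _; rewrite exprM exprn_ge0 // sqr_ge0.
  lra.
have hf : (2 * n)`!%:R != 0 :> R by rewrite pnatr_eq0 -lt0n fact_gt0.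
have e : (2^-1 : R) ^+ k = 2^-1 * 2 ^- k.-1 by rewrite -exprVn -exprS prednK.
have h2 : (2 : R) ^+ k.-1 != 0 by rewrite expf_neq0 // pnatr_eq0.
have -> : (2 * n)`!%:R * (2^-1 ^+ k * (T / (2 * n)`!%:R)) = 2 ^- k.-1 * (T / 2).
  by rewrite e; field; rewrite h2 hf.
rewrite ler_pM2l; last by rewrite invr_gt0 exprn_gt0.
by rewrite ler_pdivlMr // mulrC.
Qed.
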